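(* Let $q$ be a power of an odd prime and let $k\geq d\geq 1$ be integers. Then \[ \bigl|\Delta_k\bigl((\mathbb{F}_q^d)^{k+1}\setminus D\bigr)\bigr|\approx q^{d(k+1)-\binom{d+1}{2}}, \] where $\Delta_k(S)$, for a set $S$ of configurations, denotes the set of congruence classes containing at least one element of $S$.
   Context: $\mathbb{F}_q^d$ carries the dot product $x\cdot y=\sum_i x_iy_i$; $O(\mathbb{F}_q^d)$ is the group of linear maps preserving it. Configurations $x,y\in(\mathbb{F}_q^d)^{k+1}$ are congruent if there exist $\theta\in O(\mathbb{F}_q^d)$ and $z\in\mathbb{F}_q^d$ with $y^i=\theta x^i+z$ for all $i$. For $1\leq r<d$, $D_r\subset(\mathbb{F}_q^d)^{k+1}$ is the set of configurations $(x^1,\dots,x^{k+1})$ whose affine span is an $r$-dimensional affine subspace of $\mathbb{F}_q^d$, and $D=\bigcup_{1\leq r<d}D_r$. The notation $X\approx Y$ means $c_1Y\leq X\leq c_2Y$ for positive constants independent of $q$ (allowed to depend on $d$). *)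

(* Defs.v *)
From HB Require Import structures.
From mathcomp Require Import all_boot all_order all_algebra.
Set Implicit Arguments. Unset Strict Implicit. Unset Printing Implicit Defensive.
Import Order.TTheory GRing.Theory Num.Theory.
Local Open Scope ring_scope.

Definition dotp (F : fieldType) (d : nat) (x y : 'rV[F]_d) : F :=
  \sum_(i < d) x 0 i * y 0 i.

Definition orthogonal_map (F : fieldType) (d : nat) (M : 'M[F]_d) : Prop :=
  forall x y : 'rV[F]_d, dotp (x *m M) (y *m M) = dotp x y.

Definition config (F : finFieldType) (d k : nat) := {ffun 'I_k.+1 -> 'rV[F]_d}.

Definition congruent (F : finFieldType) (d k : nat) (x y : config F d k) : Prop :=
  exists M : 'M[F]_d, orthogonal_map M /\
  exists z : 'rV[F]_d, forall i, y i = x i *m M + z.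

Definition affdim (F : finFieldType) (d k : nat) (x : config F d k) : nat :=
  \rank (\matrix_(i < k.+1) (x i - x ord0)).

(* D = union over 1 <= r < d of D_r. *)
Definition inD (F : finFieldType) (d k : nat) (x : config F d k) : bool :=
  (0 < affdim x < d)%N.

Definition cong_class (F : finFieldType) (d k : nat) (x : config F d k)
  : {set config F d k} :=
  [set y : config F d k | [exists M : 'M[F]_d,
              [forall u : 'rV[F]_d, forall v : 'rV[F]_d,
                 dotp (u *m M) (v *m M) == dotp u v]
              && [exists z : 'rV[F]_d, [forall i, y i == x i *m M + z]]]].

Lemma cong_classP (F : finFieldType) (d k : nat) (x y : config F d k) :
  reflect (congruent x y) (y \in cong_class x).
Proof.
rewrite inE; apply: (iffP existsP) => [[M /andP[/forallP oM /existsP[z /forallP Hz]]]|[M [oM [z Hz]]]].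
  exists M; split; first by move=> u v; apply/eqP; exact: (forallP (oM u)).
  by exists z => i; apply/eqP.
exists M; apply/andP; split; first by apply/forallP=> u; apply/forallP=> v; apply/eqP.
by apply/existsP; exists z; apply/forallP=> i; apply/eqP.
Qed.

Definition Delta (F : finFieldType) (d k : nat) (S : {set config F d k})
  : {set {set config F d k}} :=
  [set cong_class x | x in S].

Definition nondeg (F : finFieldType) (d k : nat) : {set config F d k} :=
  [set x | ~~ inD x].

(* Main.v *)
Require Import Defs.
From HB Require Import structures.
From mathcomp Require Import all_boot all_order all_algebra zify.
Import Order.TTheory GRing.Theory Num.Theory.
Set Implicit Arguments. Unset Strict Implicit. Unset Printing Implicit Defensive.
Local Open Scope ring_scope.

Lemma invol_card (T : finType) (f : T -> T) (P : {set T}) :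
  (forall x, f (f x) = x) -> (forall x, x \in P -> f x \in P) ->
  (forall x, x \in P -> f x != x) ->
  #|P| = (2 * #|[set x in P | (enum_rank x < enum_rank (f x))%N]|)%N.
Proof.
move=> ff fP fne; set A := [set x in P | _].
have finj : injective f by apply: (can_inj ff).
have -> : P = A :|: f @: A.
  apply/setP=> x; rewrite in_setU inE; apply/idP/idP.
  - move=> xP; rewrite xP /=; case: ltngtP => //= h.
    + apply/imsetP; exists (f x); last by rewrite ff.
      by rewrite inE fP //= ff.
    + by have := fne _ xP; rewrite -(inj_eq enum_rank_inj) -(inj_eq val_inj) /= h eqxx.
  - case/orP => [/andP[]//|/imsetP[y]]; rewrite inE => /andP[yP _] ->; exact: fP.
rewrite cardsU card_imset //.
suff -> : A :&: f @: A = set0 by rewrite cards0; lia.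
apply/setP=> x; rewrite !inE; apply/negP => /andP[/andP[_ h1] /imsetP[y]].
by rewrite inE => /andP[_ h2] ex; move: h1; rewrite ex ff; lia.
Qed.

Lemma two_neq0 (F : finFieldType) : odd #|F| -> (1 + 1 : F) != 0.
Proof.
move=> oddF; apply/negP => /eqP h2.
have := @invol_card F (fun x => x + 1) setT.
have ff (x : F) : x + 1 + 1 = x by rewrite -addrA h2 addr0.
move=> /(_ ff (fun _ _ => in_setT _)).
have fne : forall x : F, x \in setT -> x + 1 != x.
  by move=> x _; rewrite -subr_eq0 addrC addKr oner_eq0.
move=> /(_ fne); rewrite cardsT => h; move: oddF; rewrite h oddM.
by [].
Qed.

Definition Hset (F : finFieldType) : {set F} :=
  [set x in [set y : F | y != 0] | (enum_rank x < enum_rank (- x))%N].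

Lemma Hset_nz (F : finFieldType) (x : F) : x \in Hset F -> x != 0.
Proof. by rewrite !inE => /andP[]. Qed.

Lemma Hset_sq (F : finFieldType) (a b : F) :
  a \in Hset F -> b \in Hset F -> a ^+ 2 = b ^+ 2 -> a = b.
Proof.
move=> aH bH /eqP; rewrite -subr_eq0 subr_sqr mulf_eq0 => /orP[/eqP|/eqP h].
  by move/eqP; rewrite subr_eq0 => /eqP.
have hb : b = - a by apply/eqP; rewrite -addr_eq0 addrC h.
move: aH bH; rewrite !inE hb opprK => /andP[_ h1] /andP[_ h2]; by move: (ltn_trans h1 h2); rewrite ltnn.
Qed.

Lemma Hset_card (F : finFieldType) : odd #|F| -> (#|F| <= 3 * #|Hset F|)%N.
Proof.
move=> oddF; have two := two_neq0 oddF.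
have := @invol_card F (fun x => - x) [set y : F | y != 0] (@opprK F).
have h1 : forall x, x \in [set y : F | y != 0] -> - x \in [set y : F | y != 0].
  by move=> x; rewrite !inE oppr_eq0.
have h2 : forall x, x \in [set y : F | y != 0] -> - x != x.
  move=> x; rewrite inE => xnz; apply/negP => /eqP h.
  have : x *+ 2 = 0 by rewrite mulr2n -{1}h addNr.
  by move/eqP; rewrite -mulr_natl mulf_eq0 (negbTE two) (negbTE xnz).
move=> /(_ h1 h2); rewrite -/(Hset F).
have -> : #|[set y : F | y != 0]| = #|F|.-1.
  by rewrite (@eq_card _ _ (predC1 0)) ?cardC1 // => y; rewrite inE.
have : (1 < #|F|)%N by apply/card_gt1P; exists 0, 1; rewrite eq_sym oner_eq0.
move: oddF; case: #|F| => // n; case: n => // n _ _; rewrite /=.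
lia.
Qed.

Lemma sum_lt (n j : nat) : (\sum_(i < n) (i < j)%N)%N = minn n j.
Proof.
elim: n => [|n IH]; first by rewrite big_ord0 min0n.
rewrite big_ord_recr /= IH; case: (ltnP n j) => h; lia.
Qed.

Lemma card_lt_pairs (d : nat) :
  #|[set p : 'I_d * 'I_d | (p.1 < p.2)%N]| = 'C(d, 2).
Proof.
rewrite -bin2_sum big_mkord -sum1_card big_mkcond /=.
transitivity (\sum_(p : 'I_d * 'I_d) (p.1 < p.2 : nat))%N.
  by apply: eq_bigr => p _; rewrite inE; case: (_ < _)%N.
rewrite -(pair_bigA _ (fun i j : 'I_d => (i < j : nat))) /=.
rewrite exchange_big /=; apply: eq_bigr => j _.
by rewrite -[RHS](minn_idPr (ltnW (ltn_ord j))) -sum_lt.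
Qed.

Lemma pff0 (aT rT : finType) (y : rT) (D : {set aT}) (R : {set rT}) (f : {ffun aT -> rT}) p :
  f \in pffun_on y D R -> p \notin D -> f p = y.
Proof.
case/pffun_onP => /subsetP sD _ pD; apply/eqP; apply: contraNT pD => h.
by apply: sD; rewrite inE.
Qed.

Lemma leq_expl (m n e : nat) : (m <= n)%N -> (m ^ e <= n ^ e)%N.
Proof. by move=> h; elim: e => // e IH; rewrite !expnS leq_mul. Qed.

Lemma bin2_twice (d : nat) : ('C(d, 2) * 2 = d * d.-1)%N.
Proof.
elim: d => // d IH; rewrite binS bin1 mulnDl IH; case: d {IH} => //= d; lia.
Qed.

Lemma dotp_mx (F : fieldType) (d : nat) (x y : 'rV[F]_d) :
  dotp x y = (x *m y^T) 0 0.
Proof. by rewrite /dotp mxE; apply: eq_bigr => i _; rewrite mxE. Qed.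

Lemma dotpC (F : fieldType) (d : nat) (x y : 'rV[F]_d) : dotp x y = dotp y x.
Proof. by rewrite /dotp; apply: eq_bigr => i _; rewrite mulrC. Qed.

Lemma cong_refl (F : finFieldType) (d k : nat) (x : config F d k) :
  x \in cong_class x.
Proof.
apply/cong_classP; exists 1%:M; split; first by move=> u v; rewrite !mulmx1.
by exists 0 => i; rewrite mulmx1 addr0.
Qed.

Lemma cong_gram (F : finFieldType) (d k : nat) (x y : config F d k) :
  congruent x y -> forall i j,
  dotp (y i - y ord0) (y j - y ord0) = dotp (x i - x ord0) (x j - x ord0).
Proof.
case=> M [oM [z Hz]] i j; rewrite !Hz.
have e l : x l *m M + z - (x ord0 *m M + z) = (x l - x ord0) *m M.
  by rewrite mulmxBl opprD addrACA subrr addr0.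
by rewrite !e oM.
Qed.

Lemma card_ltk (k d : nat) : #|[set i : 'I_k | (i < d)%N]| = minn k d.
Proof.
rewrite -sum_lt -sum1_card big_mkcond /=; apply: eq_bigr => i _.
by rewrite inE; case: (_ < _)%N.
Qed.

Lemma tri_inj (F : finFieldType) (d k : nat) (hdk : (d <= k)%N) (X Y : 'M[F]_(k, d)) :
  (forall s t : 'I_d, (s < t)%N -> X (widen_ord hdk s) t = 0) ->
  (forall s t : 'I_d, (s < t)%N -> Y (widen_ord hdk s) t = 0) ->
  (forall s : 'I_d, X (widen_ord hdk s) s \in Hset F) ->
  (forall s : 'I_d, Y (widen_ord hdk s) s \in Hset F) ->
  (forall i j, \sum_t X i t * X j t = \sum_t Y i t * Y j t) ->
  X = Y.
Proof.
move=> X0 Y0 XH YH G.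
suff: forall n (t : 'I_d), (t < n)%N -> forall i, X i t = Y i t.
  by move=> h; apply/matrixP => i t; apply: (h t.+1).
elim=> [t //|n IH] t.
rewrite ltnS leq_eqVlt; case/orP=> [/eqP tn|h]; last by apply: IH.
set w := widen_ord hdk t.
have E i : X i t * X w t = Y i t * Y w t.
  have := G i w; rewrite (bigD1 t) //= [in RHS](bigD1 t) //=.
  rewrite (eq_bigr (fun t' => Y i t' * Y w t')); first by move/addIr.
  move=> t' /= t't; case: (ltngtP t' t) => h.
  - by rewrite !IH // -tn.
  - by rewrite X0 ?Y0 ?mulr0.
  - by move/val_inj: h t't => ->; rewrite eqxx.
have Ew : X w t = Y w t by apply: Hset_sq (XH t) (YH t) _; rewrite !expr2 E.
move=> i; apply: (mulIf (Hset_nz (XH t))); rewrite E Ew //.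
Qed.

Section Lower.
Variables (F : finFieldType) (d k : nat) (hdk : (d <= k)%N).

Lemma ord_neqF n (s t : 'I_n) : (s < t)%N -> (t == s) = false.
Proof. by move=> st; apply/eqP => e; rewrite e ltnn in st. Qed.

Lemma ord_neqF' n (s t : 'I_n) : (t < s)%N -> (t == s) = false.
Proof. by move=> st; apply/eqP => e; rewrite e ltnn in st. Qed.

Definition Xm (D : {ffun 'I_d -> F}) (Ls : {ffun 'I_d * 'I_d -> F})
  (R : {ffun 'I_k * 'I_d -> F}) : 'M[F]_(k, d) :=
  \matrix_(i, t) if (insub (val i) : option 'I_d) is Some s then
     (if t == s then D s else if (t < s)%N then Ls (t, s) else 0)
   else R (i, t).

Lemma XmE1 D Ls R (s t : 'I_d) : Xm D Ls R (widen_ord hdk s) t =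
  if t == s then D s else if (t < s)%N then Ls (t, s) else 0.
Proof. by rewrite mxE /= valK. Qed.

Lemma XmE2 D Ls R (i : 'I_k) t : (d <= i)%N -> Xm D Ls R i t = R (i, t).
Proof. by move=> h; rewrite mxE insubN // -leqNgt. Qed.

Definition cfgL D Ls R : config F d k :=
  finfun (fun j : 'I_k.+1 => (if unlift ord0 j is Some i then row i (Xm D Ls R) else 0 : 'rV[F]_d)).

Lemma cfgL0 D Ls R : cfgL D Ls R ord0 = 0.
Proof. by rewrite ffunE unlift_none. Qed.

Lemma cfgLS D Ls R i : cfgL D Ls R (lift ord0 i) = row i (Xm D Ls R).
Proof. by rewrite ffunE liftK. Qed.

Definition Plt : {set 'I_d * 'I_d} := [set p : 'I_d * 'I_d | (p.1 < p.2)%N].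
Definition Pk : {set 'I_k * 'I_d} := [set p : 'I_k * 'I_d | (d <= p.1)%N].

Definition Pset :=
  setX (setX [set D : {ffun 'I_d -> F} | D \in ffun_on (Hset F)]
             [set L : {ffun 'I_d * 'I_d -> F} | L \in pffun_on 0 Plt setT])
       [set R : {ffun 'I_k * 'I_d -> F} | R \in pffun_on 0 Pk setT].

Definition cfgP (p : {ffun 'I_d -> F} * {ffun 'I_d * 'I_d -> F} * {ffun 'I_k * 'I_d -> F}) :=
  cfgL p.1.1 p.1.2 p.2.

Lemma cfgP_nondeg p : p \in Pset -> cfgP p \in nondeg F d k.
Proof.
case: p => [[D L] R]; rewrite !inE /= => /andP[/andP[/ffun_onP HD _] _].
rewrite /inD /affdim negb_and; apply/orP; right; rewrite -leqNgt.
set V := \matrix_(i < k.+1) _.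
set f := fun s : 'I_d => lift ord0 (widen_ord hdk s).
have Ef s t : rowsub f V s t = Xm D L R (widen_ord hdk s) t.
  by rewrite [LHS]mxE [LHS]mxE /cfgP /= cfgL0 subr0 cfgLS mxE.
have unit : rowsub f V \in unitmx.
  rewrite unitmxE unitfE det_trig.
    rewrite prodf_seq_neq0; apply/allP => s _ /=; rewrite Ef XmE1 eqxx.
    exact: Hset_nz.
  apply/is_trig_mxP => s t st; rewrite Ef XmE1.
  by rewrite ord_neqF // leq_gtF // ltnW.
by rewrite -{1}(mxrank_unit unit) mxrankS // rowsub_sub.
Qed.

Lemma cfgP_inj : {in Pset &, injective (fun p => cong_class (cfgP p))}.
Proof.
case=> [[Da La] Ra] [[Db Lb] Rb]; rewrite !in_setX !in_set /=.
move=> /andP[/andP[/ffun_onP HDa HLa] HRa] /andP[/andP[/ffun_onP HDb HLb] HRb] hc.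
have cg : congruent (cfgP (Da, La, Ra)) (cfgP (Db, Lb, Rb)).
  by apply/cong_classP; rewrite hc cong_refl.
have EX : Xm Da La Ra = Xm Db Lb Rb.
  apply: (tri_inj (hdk := hdk)).
  - by move=> s t st; rewrite XmE1 ord_neqF // leq_gtF // ltnW.
  - by move=> s t st; rewrite XmE1 ord_neqF // leq_gtF // ltnW.
  - by move=> s; rewrite XmE1 eqxx.
  - by move=> s; rewrite XmE1 eqxx.
  move=> i j; have := cong_gram cg (lift ord0 i) (lift ord0 j).
  rewrite /cfgP /= !cfgL0 !subr0 !cfgLS => h.
  have rE (X : 'M[F]_(k, d)) i' j' : \sum_t X i' t * X j' t = dotp (row i' X) (row j' X).
    by rewrite /dotp; apply: eq_bigr => t _; rewrite !mxE.
  by rewrite !rE h.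
have ED : Da = Db.
  by apply/ffunP => s; have := congr1 (fun X : 'M[F]_(k, d) => X (widen_ord hdk s) s) EX; rewrite /= !XmE1 eqxx.
have EL : La = Lb.
  apply/ffunP => -[t s]; case: (boolP ((t, s) \in Plt)) => h; last first.
    by rewrite (pff0 HLa h) (pff0 HLb h).
  move: h; rewrite inE /= => ts.
  have := congr1 (fun X : 'M[F]_(k, d) => X (widen_ord hdk s) t) EX; rewrite /= !XmE1 ts.
  by rewrite ord_neqF' // => ->.
have ER : Ra = Rb.
  apply/ffunP => -[i t]; case: (boolP ((i, t) \in Pk)) => h; last first.
    by rewrite (pff0 HRa h) (pff0 HRb h).
  move: h; rewrite inE /= => di.
  by have := congr1 (fun X : 'M[F]_(k, d) => X i t) EX; rewrite /= !XmE2 // => ->.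
by rewrite ED EL ER.
Qed.

End Lower.

Lemma unit_row1 (F : fieldType) n m (A : 'M[F]_(m, n)) (s : 'I_n -> 'I_m) a :
  rowsub s A \in unitmx -> row a (rowsub s A) *m invmx (rowsub s A) = row a 1%:M.
Proof. by move=> u; rewrite -row_mul mulmxV. Qed.

Lemma unit_sub_inj (F : fieldType) n m (A : 'M[F]_(m, n)) (s : 'I_n -> 'I_m) :
  rowsub s A \in unitmx -> injective s.
Proof.
move=> u a b eab.
have : row a (1%:M : 'M[F]_n) = row b 1%:M.
  by rewrite -!(unit_row1 _ u) !row_rowsub eab.
move/rowP/(_ a); rewrite !mxE eqxx /= => /eqP; case: (b =P a) => // _.
by rewrite oner_eq0.
Qed.

Lemma unit_sub_nz (F : fieldType) n m (A : 'M[F]_(m, n)) (s : 'I_n -> 'I_m) a :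
  rowsub s A \in unitmx -> row (s a) A != 0.
Proof.
move=> u; apply/negP => /eqP h.
have : row a (1%:M : 'M[F]_n) = 0 by rewrite -(unit_row1 _ u) row_rowsub h mul0mx.
by move/rowP/(_ a); rewrite !mxE eqxx /= => /eqP; rewrite oner_eq0.
Qed.

Lemma exists_unit_sub (F : fieldType) n m (A : 'M[F]_(m, n)) :
  \rank A = n -> exists s : {ffun 'I_n -> 'I_m}, rowsub s A \in unitmx.
Proof.
move=> rA.
suff: forall r (f : 'I_r -> 'I_m), row_free (rowsub f A) -> r = n ->
   exists s : {ffun 'I_n -> 'I_m}, rowsub s A \in unitmx.
  by move=> /(_ _ _ (maxrowsub_free A)); apply.
move=> r f fr rn; subst r; exists (finfun f).
rewrite (eq_rowsub _ (ffunE f)) -row_free_unit //.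
Qed.

Lemma reconstruct (F : fieldType) n m (Vx Vy : 'M[F]_(m, n)) (s : 'I_n -> 'I_m) :
  rowsub s Vx \in unitmx -> rowsub s Vy \in unitmx ->
  Vx *m (rowsub s Vx)^T = Vy *m (rowsub s Vy)^T ->
  exists M : 'M[F]_n, M *m M^T = 1%:M /\ Vx *m M = Vy.
Proof.
move=> uA uB E.
have EG : rowsub s Vx *m (rowsub s Vx)^T = rowsub s Vy *m (rowsub s Vy)^T.
  by rewrite (rowsubE s Vx) (rowsubE s Vy) -!mulmxA -(rowsubE s Vx) -(rowsubE s Vy) E.
move: uA uB E EG; set A := rowsub s Vx; set B := rowsub s Vy; clearbody A B => uA uB E EG.
exists (invmx A *m B); split.
  rewrite trmx_mul !mulmxA -(mulmxA _ B) -EG mulmxA mulVmx // mul1mx.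
  by rewrite trmx_inv mulmxV // unitmx_tr.
have uBt : B^T \in unitmx by rewrite unitmx_tr.
apply: (can_inj (mulmxK uBt)).
by rewrite -!mulmxA -EG (mulmxA (invmx A)) mulVmx // mul1mx E.
Qed.

Lemma zmod_rearr (V : zmodType) (a b c e : V) : a - b = c - e -> c = a + (e - b).
Proof. by move=> h; rewrite addrCA h addrC subrK. Qed.

Lemma pffun_in (aT rT : finType) (y : rT) (D : {set aT}) (f : {ffun aT -> rT}) :
  (forall p, p \notin D -> f p = y) -> f \in pffun_on y D setT.
Proof.
move=> H; apply/pffun_onP; split; last by move=> ? ?; rewrite inE.
by apply/subsetP => p; rewrite inE; apply: contraR => h; apply/eqP/H.
Qed.

Lemma card_imset_fact (T U W : finType) (S : {set T}) (f : T -> U) (g : T -> W) :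
  {in S &, forall x y, g x = g y -> f x = f y} -> (#|f @: S| <= #|g @: S|)%N.
Proof.
move=> fg; case: (set_0Vmem S) => [SE|[x0 x0S]]. by rewrite SE !imset0 !cards0.
pose h w := if [pick x in S | g x == w] is Some x then f x else f x0.
apply: (leq_trans _ (leq_imset_card h _)); apply: subset_leq_card.
apply/subsetP => _ /imsetP[x xS ->]; apply/imsetP; exists (g x); first exact: imset_f.
rewrite /h; case: pickP => [y /andP[yS /eqP gy]|/(_ x)]; first exact: fg.
by rewrite xS eqxx.
Qed.

Section Upper.
Variables (F : finFieldType) (d k : nat).

Definition Vm (x : config F d k) : 'M[F]_(k.+1, d) := \matrix_i (x i - x ord0).
Definition Sig := {ffun 'I_d -> 'I_k.+1}.
Definition Pm x (s : Sig) := Vm x *m (rowsub s (Vm x))^T.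
Definition dataT := (Sig * {ffun 'I_d -> F} * {ffun 'I_d * 'I_d -> F} * {ffun 'I_k.+1 * 'I_d -> F})%type.
Definition enc x (s : Sig) : dataT :=
  (s, [ffun a => Pm x s (s a) a],
      [ffun p : 'I_d * 'I_d => if (p.1 < p.2)%N then Pm x s (s p.1) p.2 else 0],
      [ffun p : 'I_k.+1 * 'I_d => if (p.1 \in codom s) || (p.1 == ord0) then 0 else Pm x s p.1 p.2]).
Definition data x : option dataT :=
  if [pick s : Sig | rowsub s (Vm x) \in unitmx] is Some s then Some (enc x s) else None.

Lemma PmE x s j b : Pm x s j b = \sum_t Vm x j t * Vm x (s b) t.
Proof. by rewrite mxE; apply: eq_bigr => t _; rewrite !mxE. Qed.

Lemma Pm_sym x s a b : Pm x s (s a) b = Pm x s (s b) a.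
Proof. by rewrite !PmE; apply: eq_bigr => t _; rewrite mulrC. Qed.

Lemma Pm0 x s b : Pm x s ord0 b = 0.
Proof. by rewrite PmE big1 // => t _; rewrite /Vm !mxE subrr mul0r. Qed.

Lemma enc_inj x y s : enc x s = enc y s -> Pm x s = Pm y s.
Proof.
case=> eD eG eC; apply/matrixP => j b.
case: (j =P ord0) => [->|j0]; first by rewrite !Pm0.
case: (boolP (j \in codom s)) => [/codomP[a ->]|js]; last first.
  have := congr1 (fun f : {ffun 'I_k.+1 * 'I_d -> F} => f (j, b)) eC; rewrite !ffunE /= (negbTE js).
  by move/eqP: j0 => /negbTE ->.
case: (ltngtP a b) => ab.
- by have := congr1 (fun f : {ffun 'I_d * 'I_d -> F} => f (a, b)) eG; rewrite !ffunE /= ab.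
- rewrite Pm_sym [RHS]Pm_sym.
  by have := congr1 (fun f : {ffun 'I_d * 'I_d -> F} => f (b, a)) eG; rewrite !ffunE /= ab.
- move/val_inj: ab => ->.
  by have := congr1 (fun f : {ffun 'I_d -> F} => f b) eD; rewrite !ffunE.
Qed.

Lemma rowVm x i : row i (Vm x) = x i - x ord0.
Proof. by rewrite rowK. Qed.

Lemma data_some x y t : data x = Some t -> data y = Some t -> congruent x y.
Proof.
rewrite /data; case: pickP => [s us|//]; case: pickP => [s' us'|//] [<-].
move=> /(congr1 (odflt (enc x s))) /= e.
have ss : s' = s by move: (congr1 (fun t : dataT => t.1.1.1) e).
rewrite ss in e us'; have EP := enc_inj (esym e).
have [M [MM VM]] := reconstruct us us' EP.
exists M; split.
  move=> u v; rewrite !dotp_mx trmx_mul !mulmxA -(mulmxA u) MM mulmx1 //.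
exists (y ord0 - x ord0 *m M) => i.
apply: zmod_rearr; rewrite -mulmxBl -!rowVm -row_mul VM //.
Qed.

Lemma data_none_V x : (0 < d)%N -> x \in nondeg F d k -> data x = None -> Vm x = 0.
Proof.
move=> d0; rewrite inE /inD /affdim -/(Vm x) /data; case: pickP => [//|nos] nd _.
apply/eqP; rewrite -mxrank_eq0; apply/negP => r0.
have rd : \rank (Vm x) = d.
  apply/eqP; rewrite eqn_leq rank_leq_col /=; move: nd r0; rewrite lt0n; lia.
by have [s us] := exists_unit_sub rd; have := nos s; rewrite us.
Qed.

Lemma data_none x y : (0 < d)%N -> x \in nondeg F d k -> y \in nondeg F d k ->
  data x = None -> data y = None -> congruent x y.
Proof.
move=> d0 xn yn dx dy.
have Vx := data_none_V d0 xn dx; have Vy := data_none_V d0 yn dy.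
exists 1%:M; split; first by move=> u v; rewrite !mulmx1.
exists (y ord0 - x ord0) => i; rewrite mulmx1.
apply: zmod_rearr; rewrite -!rowVm Vx Vy !row0 //.
Qed.

End Upper.

Section Count.
Variables (F : finFieldType) (d k : nat).

Definition goodS (s : Sig d k) := injectiveb s && (ord0 \notin codom s).
Definition Asig (s : Sig d k) := [set j : 'I_k.+1 | (j \notin codom s) && (j != ord0)].
Definition Dsig (s : Sig d k) := setX (Asig s) [set: 'I_d].
Definition Wset : {set dataT F d k} :=
  [set t : dataT F d k | [&& goodS t.1.1.1, t.1.2 \in pffun_on 0 (Plt d) setT
                          & t.2 \in pffun_on 0 (Dsig t.1.1.1) setT]].

Lemma data_in (x : config F d k) : data x \in None |: (Some @: Wset).
Proof.
rewrite /data; case: pickP => [s us|_]; last by rewrite !inE.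
rewrite !inE /=; apply/imsetP; exists (enc x s) => //; rewrite inE /=.
apply/and3P; split.
- apply/andP; split; first by apply/injectiveP; exact: unit_sub_inj us.
  apply/codomP => -[a e]; have := unit_sub_nz a us.
  by rewrite -e rowVm subrr eqxx.
- apply: pffun_in => p; rewrite inE ffunE => /negbTE -> //.
- apply: pffun_in => p; rewrite !inE andbT negb_and !negbK ffunE.
  by move=> ->.
Qed.

Lemma card_Asig s : goodS s -> #|Asig s| = (k - d)%N.
Proof.
case/andP => /injectiveP si s0.
have -> : Asig s = ~: (ord0 |: [set j | j \in codom s]).
  by apply/setP => j; rewrite !inE negb_or andbC.
rewrite cardsCs setCK cardsU1 inE (negbTE s0) /= card_ord cardsE (card_codom si) card_ord.
by rewrite add1n subSS.
Qed.

Lemma card_Wset :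
  (#|Wset| <= (k.+1) ^ d * (#|F| ^ d * (#|F| ^ 'C(d, 2) * #|F| ^ ((k - d) * d))))%N.
Proof.
rewrite -sum1_card (partition_big (fun t : dataT F d k => t.1.1.1) xpredT) //=.
set B := (#|F| ^ d * (#|F| ^ 'C(d, 2) * #|F| ^ ((k - d) * d)))%N.
apply: (@leq_trans (\sum_(s : Sig d k) B)%N); last first.
  by rewrite sum_nat_const card_ffun !card_ord.
apply: leq_sum => s _.
case: (boolP (goodS s)) => gs; last first.
  rewrite big_pred0 // => t; apply/negP => /andP[]; rewrite inE => /and3P[gt _ _] /eqP ts.
  by rewrite ts (negbTE gs) in gt.
rewrite sum1dep_card; set S := [set _ | _].
set Y := setX (setX [set: {ffun 'I_d -> F}] [set g : {ffun 'I_d * 'I_d -> F} | g \in pffun_on 0 (Plt d) setT])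
                [set c : {ffun 'I_k.+1 * 'I_d -> F} | c \in pffun_on 0 (Dsig s) setT].
have -> : B = #|Y|.
  rewrite !cardsX cardsT card_ffun card_ord !cardsE !card_pffun_on cardsT.
  by rewrite /Plt card_lt_pairs /Dsig cardsX card_Asig // cardsT card_ord /B mulnA.
set f := fun t : dataT F d k => (t.1.1.2, t.1.2, t.2).
have inj : {in S &, injective f}.
  move=> [[[s1 a1] b1] c1] [[[s2 a2] b2] c2]; rewrite !inE /= => /andP[_ /eqP e1] /andP[_ /eqP e2].
  by rewrite /f /= => -[-> -> ->]; rewrite e1 e2.
rewrite -(card_in_imset inj).
apply: subset_leq_card; apply/subsetP => y /imsetP[t]; rewrite !inE => /andP[] /and3P[_ ht2 ht3] /eqP ts ->.
by rewrite /f /= ht2 -ts ht3.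
Qed.

End Count.

Lemma cong_trans (F : finFieldType) d k (x y w : config F d k) :
  congruent x y -> congruent y w -> congruent x w.
Proof.
case=> M1 [o1 [z1 h1]] [M2 [o2 [z2 h2]]].
exists (M1 *m M2); split; first by move=> u v; rewrite !mulmxA o2 o1.
exists (z1 *m M2 + z2) => i; rewrite h2 h1 mulmxDl mulmxA addrA //.
Qed.

Lemma cong_class_eq (F : finFieldType) d k (x y : config F d k) :
  congruent x y -> congruent y x -> cong_class x = cong_class y.
Proof.
move=> xy yx; apply/setP => w; apply/cong_classP/cong_classP => h.
  exact: cong_trans yx h.
exact: cong_trans xy h.
Qed.

Lemma exp_id (d k : nat) : (1 <= d)%N -> (d <= k)%N ->
  (d + ('C(d, 2) + (k - d) * d) = d * k.+1 - 'C(d.+1, 2))%N.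
Proof.
move=> d1 dk; rewrite binS bin1; have h := bin2_twice d.
have e1 : ((k - d) * d = k * d - d * d)%N by rewrite mulnBl.
have e2 : (d * d.-1 = d * d - d)%N by rewrite -subn1 mulnBr muln1.
have e3 : (d <= d * d)%N by rewrite leq_pmull.
have e4 : (d * d <= k * d)%N by rewrite leq_mul2r dk orbT.
rewrite e1 mulnS; rewrite e2 in h; rewrite (mulnC d k) in e4 *; lia.
Qed.

Lemma upper (F : finFieldType) d k : (1 <= d)%N -> (d <= k)%N ->
  (#|Delta (nondeg F d k)| <= (1 + k.+1 ^ d) * #|F| ^ (d * k.+1 - 'C(d.+1, 2)))%N.
Proof.
move=> d1 dk.
have step1 : (#|Delta (nondeg F d k)| <= #|(@data F d k) @: nondeg F d k|)%N.
  apply: card_imset_fact => x y xn yn e.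
  case E: (data x) => [t|].
    have Ey : data y = Some t by rewrite -e.
    by apply: cong_class_eq; [exact: data_some E Ey | exact: data_some Ey E].
  by rewrite E in e; apply: cong_class_eq; apply: data_none.
apply: (leq_trans step1).
have step2 : ((@data F d k) @: nondeg F d k \subset None |: (Some @: Wset F d k)).
  by apply/subsetP => _ /imsetP[x _ ->]; apply: data_in.
apply: (leq_trans (subset_leq_card step2)); rewrite cardsU1 card_imset; last exact: Some_inj.
have := card_Wset F d k; rewrite -expnD -expnD exp_id // => hW.
have q1 : (1 <= #|F| ^ (d * k.+1 - 'C(d.+1, 2)))%N by rewrite expn_gt0; apply/orP; left; apply/card_gt0P; exists 0.
rewrite mulnDl mul1n leq_add //; first by case: (_ \notin _).
Qed.

Lemma card_Pk (d k : nat) : (d <= k)%N -> #|Pk d k| = ((k - d) * d)%N.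
Proof.
move=> dk.
have -> : Pk d k = setX (~: [set i : 'I_k | (i < d)%N]) [set: 'I_d].
  by apply/setP => -[i t]; rewrite !inE andbT leqNgt.
by rewrite cardsX cardsCs setCK card_ltk card_ord cardsT card_ord (minn_idPr dk).
Qed.

Lemma lower (F : finFieldType) d k : (1 <= d)%N -> (d <= k)%N -> odd #|F| ->
  (#|F| ^ (d * k.+1 - 'C(d.+1, 2)) <= 3 ^ d * #|Delta (nondeg F d k)|)%N.
Proof.
move=> d1 dk oF.
have step1 : (#|Pset F d k| <= #|Delta (nondeg F d k)|)%N.
  rewrite -(card_in_imset (cfgP_inj dk)); apply: subset_leq_card.
  apply/subsetP => _ /imsetP[p pP ->]; apply/imsetP; exists (cfgP p) => //. exact (cfgP_nondeg dk pP).
apply: (leq_trans _ (leq_mul (leqnn _) step1)).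
rewrite /Pset !cardsX !cardsE card_ffun_on !card_pffun_on !cardsT card_ord.
rewrite card_lt_pairs card_Pk // -exp_id // !expnD !mulnA -expnMn.
rewrite leq_mul2r; apply/orP; right; rewrite leq_mul2r; apply/orP; right.
by apply: leq_expl; exact: Hset_card.
Qed.

Unset Implicit Arguments.

Theorem theorem3 (d k : nat) :
  (1 <= d)%N -> (d <= k)%N ->
  exists c1 c2 : rat, 0 < c1 /\ 0 < c2 /\
    forall F : finFieldType, odd #|F| ->
      let e := (d * k.+1 - 'C(d.+1, 2))%N in
      c1 * (#|F|%:R) ^+ e <= (#|Delta (nondeg F d k)|)%:R
      /\ (#|Delta (nondeg F d k)|)%:R <= c2 * (#|F|%:R) ^+ e.
Proof.
move=> d1 dk.
have p3 : 0 < (3 ^ d)%:R :> rat by rewrite ltr0n expn_gt0.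
exists ((3 ^ d)%:R^-1), (1 + k.+1 ^ d)%:R; split; first by rewrite invr_gt0.
split; first by rewrite ltr0n.
move=> F oF e; split.
  by rewrite ler_pdivrMl // -natrX -natrM ler_nat lower.
by rewrite -natrX -natrM ler_nat upper.
Qed.
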